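(* Let $h\in\mathcal H$, $k_0=k_0(h)$, $h_0=h(k_0)$ and $h_1=h(k_0+1)$. Then $\operatorname{hdepth}(h)=k_0$ if and only if $h_0>h_1$.
   Context: $\mathcal H$ denotes the set of nonzero functions $h:\mathbb Z\to\mathbb Z_{\ge 0}$ such that $h(j)=0$ for all sufficiently negative $j$. For $h\in\mathcal H$ and integers $k\le d$, set $\beta_k^d(h)=\sum_{j\le k}(-1)^{k-j}\binom{d-j}{k-j}h(j)$, and $\operatorname{hdepth}(h)=\max\{d\in\mathbb Z:\ \beta_k^d(h)\ge 0\text{ for all integers }k\le d\}$. Also $k_0(h)=\min\{j: h(j)>0\}$. *)

(* Defs.v *)
From mathcomp Require Import all_boot all_order all_algebra.
Set Implicit Arguments. Unset Strict Implicit. Unset Printing Implicit Defensive.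
Import Order.TTheory GRing.Theory Num.Theory.
Local Open Scope ring_scope.

Definition inH (h : int -> nat) : Prop :=
  (exists j, h j <> 0%N) /\ (exists N : int, forall j, j < N -> h j = 0%N).

(* beta_k^d(h) = sum_{j <= k} (-1)^(k-j) C(d-j, k-j) h(j), where the sum is
   computed over the finite window N <= j <= k; this equals the infinite sum
   whenever h vanishes below N (the only way it is used). *)
Definition beta_from (N : int) (h : int -> nat) (k d : int) : int :=
  \sum_(i < (absz (k - N + 1)) | N + i%:Z <= k)
     let j := N + i%:Z in
     (-1) ^+ (absz (k - j)) * ('C(absz (d - j), absz (k - j)))%:Z * (h j)%:Z.

Definition hdepth_ok (N : int) (h : int -> nat) (d : int) : Prop :=
  forall k : int, k <= d -> 0 <= beta_from N h k d.

Definition is_hdepth (N : int) (h : int -> nat) (d : int) : Prop :=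
  hdepth_ok N h d /\ (forall d', hdepth_ok N h d' -> d' <= d).

Definition is_k0 (h : int -> nat) (k0 : int) : Prop :=
  (0 < h k0)%nat /\ (forall j, (0 < h j)%nat -> k0 <= j).

(* Main.v *)
Require Import Defs.
From mathcomp Require Import all_boot all_order all_algebra.
From mathcomp Require Import zify ring lra.
Import Order.TTheory GRing.Theory Num.Theory.
Local Open Scope ring_scope.

Section S.
Variables (h : int -> nat) (N k0 : int).
Hypothesis hz : forall j, j < k0 -> h j = 0%N.
Hypothesis NK : N <= k0.

Lemma beta_low k d : k < k0 -> beta_from N h k d = 0.
Proof.
move=> Hk; rewrite /beta_from big1 // => i Hi /=.
rewrite hz ?mulr0 //; lia.
Qed.

Lemma beta_k0 d : beta_from N h k0 d = (h k0)%:Z.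
Proof.
set m := absz (k0 - N).
have Em : N = k0 - m%:Z by rewrite /m; lia.
rewrite /beta_from.
have -> : absz (k0 - N + 1) = m.+1 by rewrite /m; lia.
rewrite big_mkcond big_ord_recr /= big1.
  have -> : N + m%:Z = k0 by lia.
  rewrite lexx subrr /= bin0 mul1r; lia.
move=> i _; case: ifP => // _; rewrite hz ?mulr0 //.
have := ltn_ord i; lia.
Qed.

Lemma beta_k1 d : beta_from N h (k0+1) d = (h (k0+1))%:Z - (absz (d - k0))%:Z * (h k0)%:Z.
Proof.
set m := absz (k0 - N).
have Em : N = k0 - m%:Z by rewrite /m; lia.
rewrite /beta_from.
have -> : absz (k0 + 1 - N + 1) = m.+2 by rewrite /m; lia.
rewrite big_mkcond big_ord_recr big_ord_recr /= big1.
  have -> : N + m.+1%:Z = k0 + 1 by lia.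
  have -> : N + m%:Z = k0 by lia.
  have -> : k0 + 1 - k0 = 1 by lia.
  rewrite lexx subrr /= bin0 bin1.
  rewrite expr1 expr0 !mulN1r !mul1r add0r addrC mulNr; rewrite ifT //; lia.
move=> i _; case: ifP => // _; rewrite hz ?mulr0 //.
have := ltn_ord i; lia.
Qed.
End S.

Theorem corollary1p6 (h : int -> nat) (N k0 : int) :
  inH h ->
  (forall j, j < N -> h j = 0%N) ->
  is_k0 h k0 ->
  (is_hdepth N h k0 <-> ((h (k0 + 1))%:Z < (h k0)%:Z)).
Proof.
move=> _ hN [hpos hmin].
have hz : forall j, j < k0 -> h j = 0%N.
  move=> j Hj; case: (posnP (h j)) => // /hmin; lia.
have NK : N <= k0.
  case: (lerP N k0) => // /hN; lia.
have ok0 : hdepth_ok N h k0.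
  move=> k Hk; case: (ltrP k k0) => Hk'.
    by rewrite (@beta_low h N k0 hz).
  have -> : k = k0 by lia.
  by rewrite (@beta_k0 h N k0 hz NK).
split.
  move=> [_ Hmax]; case: (ltrP (h (k0+1))%:Z (h k0)%:Z) => // H1.
  have : hdepth_ok N h (k0 + 1).
    move=> k Hk; case: (ltrP k k0) => Hk'.
      by rewrite (@beta_low h N k0 hz).
    case: (lerP k k0) => Hk''.
      have -> : k = k0 by lia.
      by rewrite (@beta_k0 h N k0 hz NK).
    have -> : k = k0 + 1 by lia.
    rewrite (@beta_k1 h N k0 hz NK).
    have -> : absz (k0 + 1 - k0)%R = 1%N by lia.
    lia.
  move/Hmax; lia.
move=> H1; split => // d' Hd'.
case: (lerP d' k0) => // Hd.
have := Hd' (k0 + 1) ltac:(lia).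
rewrite (@beta_k1 h N k0 hz NK).
have : (h k0)%:Z <= (absz (d' - k0))%:Z * (h k0)%:Z.
  rewrite -[X in X <= _]mul1r ler_wpM2r //; lia.
lia.
Qed.
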